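(* Let $n$ be a positive integer, let $\mathcal F$ be an $\mathcal N$-saturated family of subsets of $[n]$, and let $A_1,\dots,A_k$ and $B_1,\dots,B_l$ be elements of $\mathcal F$, where $k,l\ge 1$. If $\bigcap_{i=1}^k A_i\notin\mathcal F$, then in every induced copy of $\mathcal N$ in $\mathcal F\cup\{\bigcap_{i=1}^k A_i\}$ that contains $\bigcap_{i=1}^k A_i$, this set is a minimal element of the copy; moreover there is such an induced copy in which $\bigcap_{i=1}^k A_i$ is the minimal element that is comparable to both maximal elements. Similarly, if $\bigcup_{i=1}^l B_i\notin\mathcal F$, then in every induced copy of $\mathcal N$ in $\mathcal F\cup\{\bigcup_{i=1}^l B_i\}$ containing $\bigcup_{i=1}^l B_i$, this set is a maximal element of the copy; moreover there is such an induced copy in which $\bigcup_{i=1}^l B_i$ is the maximal element that is comparable to both minimal elements.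
   Context: The poset $\mathcal N$ has four elements $a,b,c,d$ with $a<c$, $b<c$, $b<d$ and no other comparabilities (so $a,b$ are its minimal elements, $c,d$ its maximal elements; $c$ is the unique maximal element comparable to both minimal elements and $b$ the unique minimal element comparable to both maximal elements). A family $\mathcal Q$ of sets (ordered by inclusion) contains an induced copy of $\mathcal N$ if there are distinct sets in $\mathcal Q$ whose inclusion relations are exactly those of $a,b,c,d$ above. A family $\mathcal F$ of subsets of $[n]=\{1,\dots,n\}$ is $\mathcal N$-saturated if $\mathcal F$ contains no induced copy of $\mathcal N$, but for every $S\subseteq[n]$ with $S\notin\mathcal F$, the family $\mathcal F\cup\{S\}$ contains an induced copy of $\mathcal N$. *)

(* Defs.v *)
From mathcomp Require Import all_boot.
Set Implicit Arguments. Unset Strict Implicit. Unset Printing Implicit Defensive.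

(* (a,b,c,d) is an induced copy of N in Q: distinct members of Q whose
   inclusion relations are exactly a < c, b < c, b < d. *)
Definition induced_N (n : nat) (Q : {set {set 'I_n}}) (a b c d : {set 'I_n}) : Prop :=
  [/\ [&& a \in Q, b \in Q, c \in Q & d \in Q],
      uniq [:: a; b; c; d],
      [&& a \subset c, b \subset c & b \subset d] &
      [&& ~~ (c \subset a), ~~ (c \subset b), ~~ (d \subset b),
          ~~ (a \subset b), ~~ (b \subset a), ~~ (a \subset d),
          ~~ (d \subset a), ~~ (c \subset d) & ~~ (d \subset c)]].

Definition contains_N (n : nat) (Q : {set {set 'I_n}}) : Prop :=
  exists a b c d, induced_N Q a b c d.

Definition N_saturated (n : nat) (F : {set {set 'I_n}}) : Prop :=
  ~ contains_N F /\
  forall S : {set 'I_n}, S \notin F -> contains_N (S |: F).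

(* Main.v *)
Require Import Defs.
From mathcomp Require Import all_boot.
Set Implicit Arguments. Unset Strict Implicit. Unset Printing Implicit Defensive.

Section Gen.
Variable T : finType.
Variable le : rel T.
Hypothesis refl : forall x, le x x.
Hypothesis trans : forall x y z, le x y -> le y z -> le x z.

Definition G (Q : {set T}) a b c d : Prop :=
  [/\ [/\ a \in Q, b \in Q, c \in Q & d \in Q],
      [/\ le a c, le b c & le b d],
      [/\ ~~ le c a, ~~ le c b, ~~ le d b, ~~ le a b & ~~ le b a] &
      [/\ ~~ le a d, ~~ le d a, ~~ le c d & ~~ le d c]].

Lemma ntrans x y z : le x y -> ~~ le x z -> ~~ le y z.
Proof. move=> H; apply: contra => H2; exact: trans H H2. Qed.
Lemma ntrans2 x y z : le y z -> ~~ le x z -> ~~ le x y.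
Proof. move=> H; apply: contra => H2; exact: trans H2 H. Qed.
Lemma nle_neq x y : ~~ le x y -> x != y.
Proof. by move=> H; apply/eqP => E; rewrite E refl in H. Qed.
Lemma nle_neq' x y : ~~ le x y -> y != x.
Proof. by move=> H; apply/eqP => E; rewrite E refl in H. Qed.

Lemma memQ (Q : {set T}) I x : x \in I |: Q -> x != I -> x \in Q.
Proof. by rewrite in_setU1 => /orP[/eqP->|//]; rewrite eqxx. Qed.

Lemma main_gen (Q : {set T}) I k (A : 'I_k -> T) :
  I \notin Q -> (forall i, A i \in Q) -> (forall i, le I (A i)) ->
  (forall x, (forall i, le x (A i)) -> le x I) ->
  ~ (exists a b c d, G Q a b c d) -> (exists a b c d, G (I |: Q) a b c d) ->
  (forall a b c d, G (I |: Q) a b c d -> I \in [:: a; b; c; d] -> I \in [:: a; b]) /\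
  (exists a c d, G (I |: Q) a I c d).
Proof.
move=> IQ AQ IA glb noN exN.
have exi : forall x, ~~ le x I -> exists i, ~~ le x (A i).
  move=> x H; have: ~~ [forall i, le x (A i)].
    by apply: contra H => /forallP; apply: glb.
  by move/forallPn.
have P1 : forall a b c d, G (I |: Q) a b c d -> I \in [:: a; b; c; d] -> I \in [:: a; b].
  move=> a b c d [[Ma Mb Mc Md] [Lac Lbc Lbd] [n1 n2 n3 n4 n5] [n6 n7 n8 n9]].
  rewrite !inE => /or4P[] /eqP E; subst; rewrite ?eqxx ?orbT //.
  - case: (exi d n9) => i Hi; exfalso; apply: noN; exists a, b, (A i), d.
    split; split.
    + exact: memQ Ma (nle_neq' n1).
    + exact: memQ Mb (nle_neq' n2).
    + exact: AQ.
    + exact: memQ Md (nle_neq n9).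
    + exact: trans Lac (IA i).
    + exact: trans Lbc (IA i).
    + exact: Lbd.
    + exact: ntrans (IA i) n1.
    + exact: ntrans (IA i) n2.
    + exact: n3.
    + exact: n4.
    + exact: n5.
    + exact: n6.
    + exact: n7.
    + exact: ntrans (IA i) n8.
    + exact: Hi.
  - case: (exi a n6) => i Hi; exfalso; apply: noN; exists a, b, c, (A i).
    split; split.
    + exact: memQ Ma (nle_neq n6).
    + exact: memQ Mb (nle_neq' n3).
    + exact: memQ Mc (nle_neq' n9).
    + exact: AQ.
    + exact: Lac.
    + exact: Lbc.
    + exact: trans Lbd (IA i).
    + exact: n1.
    + exact: n2.
    + exact: ntrans (IA i) n3.
    + exact: n4.
    + exact: n5.
    + exact: Hi.
    + exact: ntrans (IA i) n7.
    + exact: ntrans Lac Hi.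
    + exact: ntrans (IA i) n9.
split=> //.
case: exN => a [b [c [d Hg]]].
case: (boolP (I \in [:: a; b; c; d])) => Hin; last first.
  exfalso; apply: noN; exists a, b, c, d.
  move: Hin; rewrite !inE !negb_or => /and4P[h1 h2 h3 h4].
  case: Hg => [[Ma Mb Mc Md] L1 L2 L3]; split=> //; split.
  + by apply: (memQ Ma); rewrite eq_sym.
  + by apply: (memQ Mb); rewrite eq_sym.
  + by apply: (memQ Mc); rewrite eq_sym.
  + by apply: (memQ Md); rewrite eq_sym.
move: (P1 _ _ _ _ Hg Hin); rewrite !inE => /orP[]/eqP E; subst; last by exists a, c, d.
case: Hg => [[Ma Mb Mc Md] [Lac Lbc Lbd] [n1 n2 n3 n4 n5] [n6 n7 n8 n9]].
case: (exi b n5) => i Hi.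
have nAc : ~~ le (A i) c.
  apply/negP => Aic; apply: noN; exists (A i), b, c, d.
  split; split.
  + exact: AQ.
  + exact: memQ Mb (nle_neq n5).
  + exact: memQ Mc (nle_neq n1).
  + exact: memQ Md (nle_neq n7).
  + exact: Aic.
  + exact: Lbc.
  + exact: Lbd.
  + exact: ntrans Lbc Hi.
  + exact: n2.
  + exact: n3.
  + exact: ntrans (IA i) n4.
  + exact: Hi.
  + exact: ntrans (IA i) n6.
  + exact: ntrans2 Aic n9.
  + exact: n8.
  + exact: n9.
exists b, c, (A i).
split; split.
+ exact: Mb.
+ exact: setU11.
+ exact: Mc.
+ by rewrite in_setU1 AQ orbT.
+ exact: Lbc.
+ exact: Lac.
+ exact: IA.
+ exact: n2.
+ exact: n1.
+ exact: ntrans2 Lac nAc.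
+ exact: n5.
+ exact: n4.
+ exact: Hi.
+ exact: ntrans (IA i) n4.
+ exact: ntrans Lbc Hi.
+ exact: nAc.
Qed.
End Gen.

Section Link.
Variable n : nat.
Definition subR : rel {set 'I_n} := fun x y => x \subset y.
Definition supR : rel {set 'I_n} := fun x y => y \subset x.

Lemma uniq4 (T : eqType) (a b c d : T) :
  a != b -> a != c -> a != d -> b != c -> b != d -> c != d -> uniq [:: a; b; c; d].
Proof.
move=> h1 h2 h3 h4 h5 h6.
by rewrite /= !inE (negbTE h1) (negbTE h2) (negbTE h3) (negbTE h4) (negbTE h5) (negbTE h6).
Qed.

Lemma link_sub (Q : {set {set 'I_n}}) a b c d : induced_N Q a b c d <-> G subR Q a b c d.
Proof.
split.
  case=> /and4P[Ma Mb Mc Md] _ /and3P[L1 L2 L3]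
    /and5P[n1 n2 n3 n4 /and5P[n5 n6 n7 n8 n9]].
  by split; split.
case=> [[Ma Mb Mc Md] [L1 L2 L3] [n1 n2 n3 n4 n5] [n6 n7 n8 n9]].
have rf : forall x, subR x x by move=> x; exact: subxx.
have nq := @nle_neq _ subR rf.
have nq' := @nle_neq' _ subR rf.
split.
- by rewrite Ma Mb Mc Md.
- apply: uniq4.
  + by apply/eqP => E; move: n4; rewrite E /subR /supR subxx.
  + by apply/eqP => E; move: n1; rewrite E /subR /supR subxx.
  + by apply/eqP => E; move: n6; rewrite E /subR /supR subxx.
  + by apply/eqP => E; move: n2; rewrite E /subR /supR subxx.
  + by apply/eqP => E; move: n3; rewrite E /subR /supR subxx.
  + by apply/eqP => E; move: n8; rewrite E /subR /supR subxx.
- by apply/and3P; split.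
- by rewrite /subR in n1 n2 n3 n4 n5 n6 n7 n8 n9 *; rewrite n1 n2 n3 n4 n5 n6 n7 n8 n9.
Qed.

Lemma link_sup (Q : {set {set 'I_n}}) a b c d : induced_N Q d c b a <-> G supR Q a b c d.
Proof.
split.
  case=> /and4P[Md Mc Mb Ma] _ /and3P[L1 L2 L3]
    /and5P[n1 n2 n3 n4 /and5P[n5 n6 n7 n8 n9]].
  by split; split.
case=> [[Ma Mb Mc Md] [L1 L2 L3] [n1 n2 n3 n4 n5] [n6 n7 n8 n9]].
have rf : forall x, supR x x by move=> x; exact: subxx.
have nq := @nle_neq _ supR rf.
have nq' := @nle_neq' _ supR rf.
split.
- by rewrite Ma Mb Mc Md.
- apply: uniq4.
  + by apply/eqP => E; move: n8; rewrite E /subR /supR subxx.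
  + by apply/eqP => E; move: n3; rewrite E /subR /supR subxx.
  + by apply/eqP => E; move: n7; rewrite E /subR /supR subxx.
  + by apply/eqP => E; move: n2; rewrite E /subR /supR subxx.
  + by apply/eqP => E; move: n1; rewrite E /subR /supR subxx.
  + by apply/eqP => E; move: n4; rewrite E /subR /supR subxx.
- by apply/and3P; split.
- by rewrite /supR in n1 n2 n3 n4 n5 n6 n7 n8 n9 *; rewrite n1 n2 n3 n4 n5 n6 n7 n8 n9.
Qed.
End Link.

Lemma perm4 (T : eqType) (x a b c d : T) : (x \in [:: a; b; c; d]) = (x \in [:: d; c; b; a]).
Proof. by rewrite !inE; case: (x == a); case: (x == b); case: (x == c); case: (x == d). Qed.
Lemma perm2 (T : eqType) (x a b : T) : (x \in [:: a; b]) = (x \in [:: b; a]).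
Proof. by rewrite !inE orbC. Qed.

Theorem lemma2p2 (n : nat) (F : {set {set 'I_n}}) (k l : nat)
    (A : 'I_k -> {set 'I_n}) (B : 'I_l -> {set 'I_n}) :
  0 < n -> N_saturated F -> 0 < k -> 0 < l ->
  (forall i, A i \in F) -> (forall j, B j \in F) ->
  ((\bigcap_(i < k) A i) \notin F ->
     (forall a b c d, induced_N ((\bigcap_(i < k) A i) |: F) a b c d ->
        (\bigcap_(i < k) A i) \in [:: a; b; c; d] ->
        (\bigcap_(i < k) A i) \in [:: a; b]) /\
     (exists a c d, induced_N ((\bigcap_(i < k) A i) |: F) a (\bigcap_(i < k) A i) c d)) /\
  ((\bigcup_(j < l) B j) \notin F ->
     (forall a b c d, induced_N ((\bigcup_(j < l) B j) |: F) a b c d ->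
        (\bigcup_(j < l) B j) \in [:: a; b; c; d] ->
        (\bigcup_(j < l) B j) \in [:: c; d]) /\
     (exists a b d, induced_N ((\bigcup_(j < l) B j) |: F) a b (\bigcup_(j < l) B j) d)).
Proof.
move=> _ [noN sat] _ _ AF BF; split.
- move=> IF.
  have [P1 [a [c [d H]]]] := @main_gen _ (@subR n) (fun x => subxx x)
     (fun x y z (h1 : x \subset y) (h2 : y \subset z) => subset_trans h1 h2) F _ k A IF AF
     (fun i => bigcap_inf i isT)
     (fun x h => introT bigcapsP (fun i _ => h i))
     (fun '(ex_intro a (ex_intro b (ex_intro c (ex_intro d h)))) =>
         noN (ex_intro _ a (ex_intro _ b (ex_intro _ c (ex_intro _ d (proj2 (link_sub _ _ _ _ _) h))))))
     (let: ex_intro a (ex_intro b (ex_intro c (ex_intro d h))) := sat _ IF in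
        ex_intro _ a (ex_intro _ b (ex_intro _ c (ex_intro _ d (proj1 (link_sub _ _ _ _ _) h))))).
  split.
  + by move=> a' b' c' d' /link_sub; apply: P1.
  + by exists a, c, d; apply/link_sub.
- move=> UF.
  have [P1 [a [c [d H]]]] := @main_gen _ (@supR n) (fun x => subxx x)
     (fun x y z (h1 : y \subset x) (h2 : z \subset y) => subset_trans h2 h1) F _ l B UF BF
     (fun i => bigcup_sup i isT)
     (fun x h => introT bigcupsP (fun i _ => h i))
     (fun '(ex_intro a (ex_intro b (ex_intro c (ex_intro d h)))) =>
         noN (ex_intro _ d (ex_intro _ c (ex_intro _ b (ex_intro _ a (proj2 (link_sup _ _ _ _ _) h))))))
     (let: ex_intro a (ex_intro b (ex_intro c (ex_intro d h))) := sat _ UF in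
        ex_intro _ d (ex_intro _ c (ex_intro _ b (ex_intro _ a (proj1 (link_sup _ _ _ _ _) h))))).
  split.
  + move=> a' b' c' d' /link_sup Hg; rewrite perm4 perm2; exact: P1 Hg.
  + by exists d, c, a; apply/link_sup.
Qed.
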